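(* Let $s\ge2$ be an even constant and $\epsilon$ a constant with $0<\epsilon<1/(2s-1)$. Let $I$ be an instance of the class $G^*_\epsilon$ with $n$ jobs, let $\mathcal{L}\subseteq\{0,1\}^n$ be the set of local optima of $I$, and for $x\in\{0,1\}^n$ let $h$ and $k$ be the numbers of large and small jobs, respectively, on the fuller machine of $x$. Then: (1) $|\{y\in\mathbb{R}:\exists x\in\{0,1\}^n \text{ with } f(x)=y\}|=O(n)$; (2) $|\{y\in\mathbb{R}:\exists x\in\mathcal{L} \text{ with } f(x)=y\}|=O(1)$; (3) for all $x\in\{0,1\}^n$ with $f(x)>1/2$, either $k=\Omega(n)$ and $x\notin\mathcal{L}$, or $\max(k,n-s-k)\ge\left(\frac12+a\right)(n-s)$ for some $a=\Omega(1)$.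
   Context: Partition problem: a solution $x\in\{0,1\}^n$ assigns job $i$ to machine $M_1$ if $x_i=0$ and to $M_2$ if $x_i=1$; the makespan $f(x)=\max\{\sum_i p_ix_i,\sum_i p_i(1-x_i)\}$ is minimised. The fuller machine is the machine whose load attains the makespan. A local optimum is a solution such that no solution at Hamming distance $1$ has strictly smaller makespan. The class $G^*_\epsilon$: instances with an even number $n$ of jobs, an even number $s=\Theta(1)$ of large jobs (jobs $1,\dots,s$), and processing times $p_i=\frac{1}{2s-1}-\frac{\epsilon}{2s}$ for $i\le s$ and $p_i=\frac{s-1}{n-s}\left(\frac{1}{2s-1}+\frac{\epsilon}{2(s-1)}\right)$ for $s<i\le n$ (the small jobs), where $0<\epsilon<1/(2s-1)$ is an arbitrarily small constant; note $\sum_i p_i=1$. Asymptotics are as $n\to\infty$. *)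

(* Defs.v *)
From HB Require Import structures.
From mathcomp Require Import all_boot all_order all_algebra.
Unset Printing Implicit Defensive.
Import Order.TTheory GRing.Theory Num.Theory.
Local Open Scope ring_scope.

(* Instances of the class G^*_eps : jobs are indexed by 'I_n, jobs i < s are
   the large jobs.  A solution is x : {ffun 'I_n -> bool}; x i = false means
   job i on machine M1, x i = true means job i on machine M2. *)

Section Partition.
Context {R : realFieldType}.

Definition ptime (s n : nat) (eps : R) (i : 'I_n) : R :=
  if (i < s)%N then 1 / (2 * s%:R - 1) - eps / (2 * s%:R)
  else (s%:R - 1) / (n%:R - s%:R) * (1 / (2 * s%:R - 1) + eps / (2 * (s%:R - 1))).

Definition load (s n : nat) (eps : R) (x : {ffun 'I_n -> bool}) (b : bool) : R :=
  \sum_(i | x i == b) ptime s n eps i.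

Definition makespan (s n : nat) (eps : R) (x : {ffun 'I_n -> bool}) : R :=
  Num.max (load s n eps x true) (load s n eps x false).

Definition flip (n : nat) (x : {ffun 'I_n -> bool}) (i : 'I_n) : {ffun 'I_n -> bool} :=
  [ffun j => if j == i then ~~ x j else x j].

Definition local_opt (s n : nat) (eps : R) (x : {ffun 'I_n -> bool}) : bool :=
  [forall i : 'I_n, ~~ (makespan s n eps (flip n x i) < makespan s n eps x)].

Definition fuller (s n : nat) (eps : R) (x : {ffun 'I_n -> bool}) : bool :=
  load s n eps x false <= load s n eps x true.

Definition nlarge_full (s n : nat) (eps : R) (x : {ffun 'I_n -> bool}) : nat :=
  #|[set i : 'I_n | (i < s)%N && (x i == fuller s n eps x)]|.
Definition nsmall_full (s n : nat) (eps : R) (x : {ffun 'I_n -> bool}) : nat :=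
  #|[set i : 'I_n | (s <= i)%N && (x i == fuller s n eps x)]|.

Definition num_values (s n : nat) (eps : R) : nat :=
  size (undup [seq makespan s n eps x | x <- enum {ffun 'I_n -> bool}]).

Definition num_local_values (s n : nat) (eps : R) : nat :=
  size (undup [seq makespan s n eps x |
                 x <- enum {ffun 'I_n -> bool} & local_opt s n eps x]).
End Partition.

(* Main.v *)
Require Import Defs.
From HB Require Import structures.
From mathcomp Require Import all_boot all_order all_algebra.
From mathcomp Require Import ring lra zify.
Import Order.TTheory GRing.Theory Num.Theory.
Local Open Scope ring_scope.

Section S.
Variables (R : realFieldType) (s n : nat) (eps : R).

Definition pL : R := 1 / (2 * s%:R - 1) - eps / (2 * s%:R).
Definition pS : R := (s%:R - 1) / (n%:R - s%:R) * (1 / (2 * s%:R - 1) + eps / (2 * (s%:R - 1))).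

Definition cntL (x : {ffun 'I_n -> bool}) b := #|[set i : 'I_n | (i < s)%N && (x i == b)]|.
Definition cntS (x : {ffun 'I_n -> bool}) b := #|[set i : 'I_n | (s <= i)%N && (x i == b)]|.

Lemma load_split x b : load s n eps x b = (cntL x b)%:R * pL + (cntS x b)%:R * pS.
Proof.
rewrite /load (bigID (fun i : 'I_n => (i < s)%N)) /=.
congr (_ + _).
- rewrite (eq_bigr (fun _ => pL)); last by move=> i /andP[_ H]; rewrite /ptime H.
  rewrite (eq_bigl (fun i => i \in [set i : 'I_n | (i < s)%N && (x i == b)])).
    by rewrite sumr_const mulr_natl.
  by move=> i; rewrite inE andbC.
- rewrite (eq_bigr (fun _ => pS)); last by move=> i /andP[_ /negbTE H]; rewrite /ptime H.
  rewrite (eq_bigl (fun i => i \in [set i : 'I_n | (s <= i)%N && (x i == b)])).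
    by rewrite sumr_const mulr_natl.
  by move=> i; rewrite inE andbC -leqNgt.
Qed.

Definition total : R := \sum_(i : 'I_n) ptime s n eps i.

Lemma load_tot x b : load s n eps x b + load s n eps x (~~ b) = total.
Proof.
rewrite /total (bigID (fun i : 'I_n => x i == b)) /=; congr (_ + _).
apply: eq_bigl => i; case: (x i); case: b => //.
Qed.

Lemma load_flip x i : load s n eps (flip n x i) (x i) = load s n eps x (x i) - ptime s n eps i.
Proof.
rewrite /load [in RHS](bigD1 i) //= addrC addrK; apply: eq_bigl => j. rewrite /flip ffunE.
by case: (eqVneq j i) => [->|_]; [case: (x i)| rewrite andbT].
Qed.

Lemma makespan_b x b : makespan s n eps x = Num.max (load s n eps x b) (load s n eps x (~~ b)).
Proof. by case: b => //=; rewrite /makespan maxC. Qed.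

Lemma makespan_full x : makespan s n eps x = load s n eps x (fuller s n eps x).
Proof.
rewrite /makespan /fuller maxEle.
case H2: (load s n eps x false <= load s n eps x true); case: ifP => H1 //.
- by apply/eqP; rewrite eq_le H1 H2.
- move: H2 H1; rewrite !leNgt => /negbFE H2 /negbFE H1.
  by have := lt_trans H1 H2; rewrite ltxx.
Qed.

Hypothesis sn : (s < n)%N.
Hypothesis s2 : (2 <= s)%N.

Lemma cardLs : #|[set i : 'I_n | (i < s)%N]| = s.
Proof.
rewrite -sum1_card (eq_bigl (fun i : 'I_n => (i < s)%N)); last by move=> i; rewrite inE.
rewrite -(big_ord_widen n (fun _ => 1%N)); last exact: ltnW.
by rewrite sum1_card card_ord.
Qed.

Lemma cardSs : #|[set i : 'I_n | (s <= i)%N]| = (n - s)%N.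
Proof.
have := cardC [set i : 'I_n | (i < s)%N]; rewrite cardLs card_ord => H.
have E : #|[set i : 'I_n | (s <= i)%N]| = #|[predC [set i : 'I_n | (i < s)%N]]|.
  by apply: eq_card => i; rewrite !inE leqNgt.
rewrite E; lia.
Qed.

Lemma cntL_le x b : (cntL x b <= s)%N.
Proof.
rewrite -[X in (_ <= X)%N]cardLs; apply: subset_leq_card; apply/subsetP => i.
by rewrite !inE => /andP[].
Qed.

Lemma cntS_le x b : (cntS x b <= n - s)%N.
Proof.
rewrite -cardSs; apply: subset_leq_card; apply/subsetP => i.
by rewrite !inE => /andP[].
Qed.

Lemma total_split : total = s%:R * pL + (n - s)%:R * pS.
Proof.
rewrite /total (bigID (fun i : 'I_n => (i < s)%N)) /=; congr (_ + _).
- rewrite (eq_bigr (fun _ => pL)); last by move=> i H; rewrite /ptime H.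
  rewrite (eq_bigl (fun i => i \in [set i : 'I_n | (i < s)%N])); last by move=> i; rewrite inE.
  by rewrite sumr_const cardLs mulr_natl.
- rewrite (eq_bigr (fun _ => pS)); last by move=> i /negbTE H; rewrite /ptime H.
  rewrite (eq_bigl (fun i => i \in [set i : 'I_n | (s <= i)%N])); last by move=> i; rewrite inE ltnNge negbK.
  by rewrite sumr_const cardSs mulr_natl.
Qed.

Lemma total1 : total = 1.
Proof.
rewrite total_split natrB; last exact: ltnW.
have hs : 2%:R <= s%:R :> R by rewrite (ler_nat R 2).
have hns : s%:R < n%:R :> R by rewrite ltr_nat.
rewrite /pL /pS; field.
by apply/and4P; split; rewrite gt_eqF //; lra.
Qed.
Hypothesis eps0 : 0 < eps.
Hypothesis epsu : eps < 1 / (2 * s%:R - 1).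

Lemma S2 : 2 <= s%:R :> R. Proof. by rewrite (ler_nat R 2). Qed.
Lemma NS : s%:R < n%:R :> R. Proof. by rewrite ltr_nat. Qed.

Lemma eps1 : eps * (2 * s%:R - 1) < 1.
Proof. have := S2 => h; by move: epsu; rewrite ltr_pdivlMr //; lra. Qed.

Lemma pL_gt : 1 / (2 * s%:R) < pL.
Proof.
have h := S2; have h1 := eps1.
have E : pL - 1 / (2 * s%:R) = (1 - eps * (2 * s%:R - 1)) / (2 * s%:R * (2 * s%:R - 1)).
  rewrite /pL; field; by apply/andP; split; rewrite gt_eqF //; lra.
rewrite -subr_gt0 E divr_gt0 //; first lra.
apply: mulr_gt0; lra.
Qed.

Lemma pL_pos : 0 < pL.
Proof. apply: lt_trans pL_gt; have := S2 => h; apply: divr_gt0; lra. Qed.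

Lemma pS_pos : 0 < pS.
Proof.
have h := S2; have h2 := NS.
rewrite /pS; apply: mulr_gt0; first (apply: divr_gt0; lra).
apply: addr_gt0; apply: divr_gt0; (try exact: eps0); lra.
Qed.

Lemma MpS : (n - s)%:R * pS = 1 - s%:R * pL.
Proof. have := total1; rewrite total_split => h; lra. Qed.

Lemma pL_half : pL < 1 / 2.
Proof.
have h := S2; have h1 := MpS; have h2 := pS_pos; have h3 := pL_pos.
have h4 : 0 < (n - s)%:R * pS :> R by apply: mulr_gt0; rewrite // ltr0n subn_gt0.
have h5 : 0 <= (s%:R - 2) * pL by apply: mulr_ge0; lra.
lra.
Qed.

Hypothesis n3 : (3 * s <= n)%N.

Lemma pS_lt_pL : pS < pL.
Proof.
have h := S2; have h1 := MpS; have h2 := pS_pos; have h3 := pL_pos; have h6 := pL_gt.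
have hm : 2 * s%:R <= (n - s)%:R :> R by rewrite -natrM ler_nat; lia.
have h4 : 0 <= ((n - s)%:R - 2 * s%:R) * pS by apply: mulr_ge0; lra.
have h7 : 1 < pL * (2 * s%:R) by move: h6; rewrite ltr_pdivrMr //; lra.
have h8 : 0 < s%:R * pL by apply: mulr_gt0; lra.
rewrite -subr_gt0.
have : 0 < (pL - pS) * (2 * s%:R) by lra.
rewrite pmulr_lgt0 //; lra.
Qed.


Lemma not_lopt (x : {ffun 'I_n -> bool}) (i : 'I_n) b : x i = b -> (s <= i)%N -> pS < 2 * load s n eps x b - 1 ->
  makespan s n eps x = load s n eps x b -> ~~ local_opt s n eps x.
Proof.
move=> xb si hg hm; apply/forallPn; exists i; rewrite negbK.
rewrite (makespan_b (flip n x i) (x i)) hm -xb load_flip.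
have E : load s n eps (flip n x i) (~~ x i) = total - load s n eps (flip n x i) (x i).
  by rewrite -(load_tot (flip n x i) (x i)) addrC addKr.
rewrite E load_flip total1 gt_max.
have -> : ptime s n eps i = pS by rewrite /ptime ltnNge si.
have := pS_pos => hp; rewrite xb; clear E epsu; apply/andP; split; lra.
Qed.

Lemma part1 : (num_values s n eps <= s.+1 * n.+1)%N.
Proof.
rewrite /num_values.
set l := [seq makespan s n eps x | x <- enum {ffun 'I_n -> bool}].
have sub : {subset undup l <= [seq (h%:R * pL + k%:R * pS : R) | h <- iota 0 s.+1, k <- iota 0 n.+1]}.
  move=> v; rewrite mem_undup => /mapP [x _ ->]; apply/allpairsP.
  exists (cntL x (fuller s n eps x), cntS x (fuller s n eps x)); split.
  - by rewrite mem_iota /= ltnS cntL_le.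
  - by rewrite mem_iota /= ltnS; apply: leq_trans (max_card _) _; rewrite card_ord.
  - by rewrite makespan_full load_split.
by have := uniq_leq_size (undup_uniq l) sub; rewrite size_allpairs !size_iota.
Qed.

Lemma flip_mk (x : {ffun 'I_n -> bool}) (i : 'I_n) : (s <= i)%N ->
  makespan s n eps (flip n x i) = Num.max (load s n eps x (x i) - pS) (1 - (load s n eps x (x i) - pS)).
Proof.
move=> si.
rewrite (makespan_b (flip n x i) (x i)) load_flip.
have E : load s n eps (flip n x i) (~~ x i) = total - load s n eps (flip n x i) (x i).
  by rewrite -(load_tot (flip n x i) (x i)) addrC addKr.
rewrite E load_flip total1.
have -> : ptime s n eps i = pS by rewrite /ptime ltnNge si.
by [].
Qed.

Lemma aux_kf (a b c p : R) : 1/2 <= a + b * p -> a + c * p <= (1 + p) / 2 -> 0 <= (c - b - 1) * p -> 0 < p -> False.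
Proof. move=> *; lra. Qed.

Definition kf (h : nat) : nat := find (fun k : nat => 1/2 <= h%:R * pL + k%:R * pS) (iota 0 n.+1).

Lemma kf_spec h k : (k <= n)%N -> 1/2 <= h%:R * pL + k%:R * pS ->
  h%:R * pL + k%:R * pS <= (1 + pS) / 2 -> kf h = k.
Proof.
move=> kn h1 h2.
set P := (fun k : nat => 1/2 <= h%:R * pL + k%:R * pS).
have hasP : has P (iota 0 n.+1) by apply/hasP; exists k; rewrite ?mem_iota //.
have := hasP; rewrite has_find size_iota => hf.
have := nth_find 0%N hasP; rewrite nth_iota // add0n -/(kf h) => Pk.
have hpS := pS_pos.
case: (ltngtP (kf h) k) => // hk.
- have h3 : 0 <= (k%:R - (kf h)%:R - 1) * pS.
    apply: mulr_ge0; last lra.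
    have : ((kf h).+1)%:R <= k%:R :> R by rewrite ler_nat.
    rewrite -addn1 natrD; lra.
  move: Pk; rewrite /P => Pk; exfalso; exact: (aux_kf _ _ _ _ Pk h2 h3 hpS).
- have := before_find 0%N hk; rewrite nth_iota ?add0n; last by rewrite ltnS.
  by rewrite /P h1.
Qed.

Lemma part2 : (num_local_values s n eps <= 2 * s.+1)%N.
Proof.
rewrite /num_local_values.
set l := [seq makespan s n eps x | x <- enum {ffun 'I_n -> bool} & local_opt s n eps x].
have sub : {subset undup l <= [seq (h%:R * pL : R) | h <- iota 0 s.+1] ++
                              [seq (h%:R * pL + (kf h)%:R * pS : R) | h <- iota 0 s.+1]}.
  move=> v; rewrite mem_undup => /mapP [x]; rewrite mem_filter => /andP[lo _] ->.
  have hm := makespan_full x.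
  set b := fuller s n eps x in hm.
  have hls := load_split x b.
  have hkn : (cntS x b <= n)%N by apply: leq_trans (max_card _) _; rewrite card_ord.
  have hh : (cntL x b < s.+1)%N by rewrite ltnS cntL_le.
  rewrite mem_cat; apply/orP.
  case: (posnP (cntS x b)) => hk.
  - left; rewrite hm hls hk mul0r addr0; apply: (map_f (fun h : nat => (h%:R * pL : R))); by rewrite mem_iota.
  - right; move/card_gt0P: hk => [i]; rewrite inE => /andP[si /eqP xi].
    move/forallP: lo => /(_ i); rewrite flip_mk // -leNgt xi -hm le_max => hor.
    have hpS := pS_pos.
    have hge : 1/2 <= makespan s n eps x.
      have := load_tot x b; rewrite total1 => ht.
      have := makespan_b x b; rewrite -hm => e.
      have : load s n eps x (~~ b) <= makespan s n eps x by rewrite e le_max lexx orbT.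
      lra.
    have hle : makespan s n eps x <= (1 + pS) / 2.
      case/orP: hor => hh2; lra.
    rewrite hm hls in hge hle *.
    rewrite -(kf_spec _ _ hkn hge hle).
    by apply: (map_f (fun h => h%:R * pL + (kf h)%:R * pS)); rewrite mem_iota.
have := uniq_leq_size (undup_uniq l) sub.
by rewrite size_cat !size_map size_iota addnn -mul2n.
Qed.

Hypothesis se : ~~ odd s.
Hypothesis ne : ~~ odd n.

Lemma part3 (x : {ffun 'I_n -> bool}) : 1/2 < makespan s n eps x ->
 ((1/6 : R) * n%:R <= (nsmall_full s n eps x)%:R /\ ~~ local_opt s n eps x)
 \/ (1/2 + pL/2) * (n - s)%:R <= (maxn (nsmall_full s n eps x) (n - s - nsmall_full s n eps x))%:R.
Proof.
move=> hL.
have hm := makespan_full x.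
set b := fuller s n eps x in hm.
have -> : nsmall_full s n eps x = cntS x b by [].
have hkm := cntS_le x b.
have hls := load_split x b.
set k := cntS x b in hkm hls *.
set h := cntL x b in hls.
have hpL := pL_pos; have hpS := pS_pos; have hlt := pS_lt_pL; have hhalf := pL_half.
have hM := MpS. clear epsu.
have hms : (n - s)%:R = n%:R - s%:R :> R by rewrite natrB // ltnW.
have h3 : 3 * s%:R <= n%:R :> R by rewrite -(natrM R 3) ler_nat.
set m := (n - s)%N in hM hkm hms *.
case: (boolP ((1/2 + pL/2) * m%:R <= (maxn k (m - k))%:R)) => hmax; [by right|left].
move: hmax; rewrite -ltNge => hmax.
have hk1 : k%:R < (1/2 + pL/2) * m%:R.
  by apply: le_lt_trans hmax; rewrite ler_nat leq_maxl.
have hk2 : m%:R - k%:R < (1/2 + pL/2) * m%:R.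
  by rewrite -natrB //; apply: le_lt_trans hmax; rewrite ler_nat leq_maxr.
have hq : 0 <= (1/2 - pL) * m%:R by apply: mulr_ge0; rewrite ?ler0n //; lra.
have hK : (1/6 : R) * n%:R < k%:R by lra.
split; first lra.
have es : s = (s./2 * 2)%N.
  by rewrite -[in LHS](odd_double_half s) (negbTE se) add0n muln2.
have em : m = (m./2 * 2)%N.
  have om : odd m = false by rewrite /m oddB ?(negbTE se) ?(negbTE ne) // ltnW.
  by rewrite -[in LHS](odd_double_half m) om add0n muln2.
set t2 := s./2 in es. set m2 := m./2 in em.
have eS : s%:R = 2 * t2%:R :> R by rewrite [in LHS]es natrM mulrC.
have eM : m%:R = 2 * m2%:R :> R by rewrite [in LHS]em natrM mulrC.
rewrite eS in hM. rewrite eM in hk1 hk2 hM.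
have ht2 : 0 <= t2%:R :> R := ler0n _ _.
have hm2 : 0 <= m2%:R :> R := ler0n _ _.
have he1 : (k%:R - m2%:R) * pS < pL / 2.
  apply: (lt_le_trans (y := pL / 2 * ((2 * m2%:R) * pS))).
    by rewrite mulrA ltr_pM2r //; lra.
  rewrite hM.
  have : 0 <= pL / 2 * (2 * t2%:R * pL) by apply: mulr_ge0; [lra| apply: mulr_ge0; lra].
  lra.
have he2 : - (pL / 2) < (k%:R - m2%:R) * pS.
  have : (m2%:R - k%:R) * pS < pL / 2.
    apply: (lt_le_trans (y := pL / 2 * ((2 * m2%:R) * pS))).
      by rewrite mulrA ltr_pM2r //; lra.
    rewrite hM.
    have : 0 <= pL / 2 * (2 * t2%:R * pL) by apply: mulr_ge0; [lra| apply: mulr_ge0; lra].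
    lra.
  lra.
have hid : 2 * load s n eps x b - 1 = 2 * ((h%:R - t2%:R) * pL) + 2 * ((k%:R - m2%:R) * pS).
  rewrite hls; lra.
have hg : pS < 2 * load s n eps x b - 1.
  case: (ltngtP h t2) => hs.
  - have : 0 <= (t2%:R - h%:R - 1) * pL.
      apply: mulr_ge0; last lra.
      have : (h.+1)%:R <= t2%:R :> R by rewrite ler_nat.
      rewrite -addn1 natrD; lra.
    rewrite -hm in hid; lra.
  - have : 0 <= (h%:R - t2%:R - 1) * pL.
      apply: mulr_ge0; last lra.
      have : (t2.+1)%:R <= h%:R :> R by rewrite ler_nat.
      rewrite -addn1 natrD; lra.
    lra.
  - rewrite hs subrr mul0r mulr0 add0r in hid.
    case: (leqP k m2) => hk.
    + have : 0 <= (m2%:R - k%:R) * pS.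
        apply: mulr_ge0; last lra.
        have : k%:R <= m2%:R :> R by rewrite ler_nat.
        lra.
      rewrite -hm in hid; lra.
    + have : 0 <= (k%:R - m2%:R - 1) * pS.
        apply: mulr_ge0; last lra.
        have : (m2.+1)%:R <= k%:R :> R by rewrite ler_nat.
        rewrite -addn1 natrD; lra.
      lra.
have : (0 < k)%N.
  by rewrite -(ltr0n R); apply: le_lt_trans hK; apply: mulr_ge0; rewrite ?ler0n //; lra.
case/card_gt0P => i; rewrite inE => /andP[si /eqP xi].
exact: (not_lopt x i b).
Qed.

End S.

Theorem mainTheorem12 (R : realFieldType) (s : nat) (eps : R) :
  (2 <= s)%N -> ~~ odd s -> 0 < eps -> eps < 1 / (2 * s%:R - 1) ->
  exists (C1 C2 c a : R) (N0 : nat),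
    0 < C1 /\ 0 < C2 /\ 0 < c /\ 0 < a /\
    forall n : nat, (N0 <= n)%N -> (s < n)%N -> ~~ odd n ->
      [/\ (num_values s n eps)%:R <= C1 * n%:R,
          (num_local_values s n eps)%:R <= C2 &
          forall x : {ffun 'I_n -> bool}, 1 / 2 < makespan s n eps x ->
            (c * n%:R <= (nsmall_full s n eps x)%:R /\ ~~ local_opt s n eps x)
            \/ (1 / 2 + a) * (n - s)%:R <=
               (maxn (nsmall_full s n eps x) (n - s - nsmall_full s n eps x))%:R].
Proof.
move=> s2 se eps0 epsu.
have hpL := pL_pos R s eps s2 epsu.
exists (2 * s.+1)%:R, (2 * s.+1)%:R, (1/6), (pL R s eps / 2), (3 * s)%N.
split; first by rewrite ltr0n.
split; first by rewrite ltr0n.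
split; first lra.
split; first lra.
move=> n n3 sn ne; split.
- rewrite -natrM ler_nat; apply: leq_trans (part1 R s n eps sn) _; nia.
- by rewrite ler_nat; apply: part2.
- by move=> x hx; apply: part3.
Qed.
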